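(* Let $\widetilde{T_k},\widetilde{S_k}\in J(Z)$ ($k=1,\dots,m$) be any polynomials whose images under the canonical homomorphism $J(Z)\to J(B_m)$ are $T_k$ and $S_k$ respectively. Consider the set $\mathcal P$ of polynomials $$x_1^{k_0}(\widetilde{S_m})^{\delta_m}\cdots(\widetilde{S_1})^{\delta_1}(\widetilde{T_m})^{k_m}\cdots(\widetilde{T_1})^{k_1},$$ (with any fixed arrangement of parentheses) where $k_0,\dots,k_m\ge0$, $\delta_l\in\{0,1\}$ and $\delta_l\ne0$ for at most one $l\in\{1,\dots,m\}$. Then for every subset $S\subseteq\mathcal P$ there is a finite subset $\widehat S\subseteq S$ such that every polynomial in $S$ is a consequence of $\widehat S\cup\mathrm{Id}_2(B_m)$, i.e. belongs to the $T_2$-ideal of $J(Z)$ generated by $\widehat S\cup \mathrm{Id}_2(B_m)$.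
   Context: $K$ is a field of characteristic zero, $m>1$, and $B_m=K\oplus V$ is the Jordan algebra of a nondegenerate symmetric bilinear form $f$ on an $m$-dimensional space $V$, with product $(\alpha+u)(\beta+v)=(\alpha\beta+f(u,v))+(\alpha v+\beta u)$ and grading $(B_m)_0=K$, $(B_m)_1=V$. $J(Z)$ is the free Jordan algebra on even variables $x_1,x_2,\dots$ and odd variables $y_1,y_2,\dots$, graded by parity of the number of $y$'s; $\mathrm{Id}_2(B_m)$ is the ideal of graded identities of $B_m$ (polynomials vanishing under all substitutions of $x$'s by elements of $K$ and $y$'s by elements of $V$); a $T_2$-ideal is an ideal of $J(Z)$ invariant under all grading-preserving endomorphisms; $J(B_m)=J(Z)/\mathrm{Id}_2(B_m)$. In $J(B_m)$: $T_j=\det(y_ay_b)_{a,b=1}^j$ and $S_j=\sum_{\sigma\in S_j}(-1)^\sigma y_{\sigma(1)}(y_1y_{\sigma(2)})\cdots(y_{j-1}y_{\sigma(j)})$, products of several factors being independent of bracketing in $J(B_m)$. $x_1^{0}$ and zero exponents mean the factor is omitted. *)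

(* Defs.v *)
From HB Require Import structures.
From mathcomp Require Import all_boot all_order all_algebra all_fingroup.
Set Implicit Arguments. Unset Strict Implicit. Unset Printing Implicit Defensive.
Import GRing.Theory.
Local Open Scope ring_scope.

(* ---------- Syntax of (nonassociative) polynomials in Z = {x_i} u {y_i} --------
   Xv i is the even variable x_(i+1), Yv i the odd variable y_(i+1).
   Elements of J(Z) are represented by terms; two terms denote the same element
   of J(Z) iff they are related by [cong (fun _ => False)] below.            *)
Inductive term (K : Type) : Type :=
  | Xv of nat
  | Yv of nat
  | Zero
  | Add of term K & term K
  | Scale of K & term K
  | Mul of term K & term K.
Arguments Xv {K}. Arguments Yv {K}. Arguments Zero {K}.

Section Terms.
Variable K : fieldType.

Fixpoint memT (t : term K) (s : seq (term K)) : Prop :=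
  if s is u :: s' then u = t \/ memT t s' else False.

Definition tsub (a b : term K) : term K := Add a (Scale (-1) b).

Definition tsum (s : seq (term K)) : term K := foldr (@Add K) Zero s.
Definition lprod (t : term K) (s : seq (term K)) : term K := foldl (@Mul K) t s.
(* t^n (n >= 1), left-normed: ((t t) t) ... *)
Definition tpow (t : term K) (n : nat) : term K := iter n.-1 (fun u => Mul u t) t.

Fixpoint subst (sx sy : nat -> term K) (t : term K) : term K :=
  match t with
  | Xv i => sx i
  | Yv i => sy i
  | Zero => Zero
  | Add a b => Add (subst sx sy a) (subst sx sy b)
  | Scale c a => Scale c (subst sx sy a)
  | Mul a b => Mul (subst sx sy a) (subst sx sy b)
  end.

(* syntactically homogeneous terms: parity false = even, true = odd
   (parity of the number of y's) *)
Inductive homog : bool -> term K -> Prop :=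
  | homog_X i : homog false (Xv i)
  | homog_Y i : homog true (Yv i)
  | homog_0 b : homog b Zero
  | homog_Add b t u : homog b t -> homog b u -> homog b (Add t u)
  | homog_Scale b c t : homog b t -> homog b (Scale c t)
  | homog_Mul b1 b2 t u : homog b1 t -> homog b2 u -> homog (b1 (+) b2) (Mul t u).

(* [cong G] is the congruence on terms generated by the axioms of (nonunital)
   K-algebras, the Jordan identities (commutativity and (a^2 b) a = a^2 (b a)),
   and  phi(g) = 0  for every g in G and every grading-preserving substitution
   phi (x_i |-> even element, y_i |-> odd element).  Hence the quotient by
   [cong (fun _ => False)] is the free Jordan algebra J(Z), and
   [cong G t Zero] says that (the class of) t lies in the T_2-ideal of J(Z)
   generated by G. *)
Inductive cong (G : term K -> Prop) : term K -> term K -> Prop :=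
  | c_refl t : cong G t t
  | c_sym t u : cong G t u -> cong G u t
  | c_trans t u v : cong G t u -> cong G u v -> cong G t v
  | c_Add t t' u u' : cong G t t' -> cong G u u' -> cong G (Add t u) (Add t' u')
  | c_Scale c t t' : cong G t t' -> cong G (Scale c t) (Scale c t')
  | c_Mul t t' u u' : cong G t t' -> cong G u u' -> cong G (Mul t u) (Mul t' u')
  | c_addA t u v : cong G (Add t (Add u v)) (Add (Add t u) v)
  | c_addC t u : cong G (Add t u) (Add u t)
  | c_add0 t : cong G (Add Zero t) t
  | c_addN t : cong G (Add t (Scale (-1) t)) Zero
  | c_scale1 t : cong G (Scale 1 t) t
  | c_scaleA a b t : cong G (Scale a (Scale b t)) (Scale (a * b) t)
  | c_scaleDl a b t : cong G (Scale (a + b) t) (Add (Scale a t) (Scale b t))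
  | c_scaleDr a t u : cong G (Scale a (Add t u)) (Add (Scale a t) (Scale a u))
  | c_mulDl t u v : cong G (Mul (Add t u) v) (Add (Mul t v) (Mul u v))
  | c_mulDr t u v : cong G (Mul t (Add u v)) (Add (Mul t u) (Mul t v))
  | c_mulZl a t u : cong G (Mul (Scale a t) u) (Scale a (Mul t u))
  | c_mulZr a t u : cong G (Mul t (Scale a u)) (Scale a (Mul t u))
  | c_mulC t u : cong G (Mul t u) (Mul u t)
  | c_jordan t u : cong G (Mul (Mul (Mul t t) u) t) (Mul (Mul t t) (Mul u t))
  | c_gen (sx sy : nat -> term K) g :
      (forall i, homog false (sx i)) -> (forall i, homog true (sy i)) ->
      G g -> cong G (subst sx sy g) Zero.

Definition inT2 (G : term K -> Prop) (t : term K) : Prop := cong G t Zero.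

Variable m : nat.
Variable F : 'M[K]_m.

Definition bform (u v : 'rV[K]_m) : K := (u *m F *m v^T) 0 0.

Definition Bmul (p q : K * 'rV[K]_m) : K * 'rV[K]_m :=
  (p.1 * q.1 + bform p.2 q.2, p.1 *: q.2 + q.1 *: p.2).

Fixpoint evalB (al : nat -> K) (v : nat -> 'rV[K]_m) (t : term K)
  : K * 'rV[K]_m :=
  match t with
  | Xv i => (al i, 0)
  | Yv i => (0, v i)
  | Zero => (0, 0)
  | Add a b => (evalB al v a + evalB al v b)%R
  | Scale c a => ((c * (evalB al v a).1), c *: (evalB al v a).2)
  | Mul a b => Bmul (evalB al v a) (evalB al v b)
  end.

Definition Id2 (t : term K) : Prop := forall al v, evalB al v t = (0, 0).

(* T_(n+1) = det (y_a y_b)_{a,b=1}^{n+1}, written via the Leibniz formula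
   (products left-normed; bracketing is immaterial in J(B_m)). *)
Definition Tterm (n : nat) : term K :=
  tsum [seq Scale ((-1) ^+ odd_perm s)
          (lprod (Mul (Yv 0) (Yv (s ord0)))
                 [seq Mul (Yv i) (Yv (s i)) | i : 'I_n.+1 <- behead (enum 'I_n.+1)])
       | s : {perm 'I_n.+1} <- enum {perm 'I_n.+1}].

(* S_(n+1) = sum_s (-1)^s y_{s(1)} (y_1 y_{s(2)}) ... (y_n y_{s(n+1)}) *)
Definition Sterm (n : nat) : term K :=
  tsum [seq Scale ((-1) ^+ odd_perm s)
          (lprod (Yv (s ord0))
                 [seq Mul (Yv i.-1) (Yv (s i)) | i : 'I_n.+1 <- behead (enum 'I_n.+1)])
       | s : {perm 'I_n.+1} <- enum {perm 'I_n.+1}].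

Inductive btree : Type := BLeaf of term K | BNode of btree & btree.

Fixpoint frontier (b : btree) : seq (term K) :=
  match b with BLeaf t => [:: t] | BNode l r => frontier l ++ frontier r end.

Fixpoint bterm (b : btree) : term K :=
  match b with BLeaf t => t | BNode l r => Mul (bterm l) (bterm r) end.

(* The factors of  x_1^{k0} (S_m~)^{d_m} ... (S_1~)^{d_1} (T_m~)^{k_m} ... (T_1~)^{k_1}
   in order, omitting factors with zero exponent.  Index l : 'I_m stands for
   l+1; [dl = Some l] means delta_(l+1) = 1 (and all other deltas are 0),
   [dl = None] means all deltas are 0. *)
Definition Pfactors (Tt St : 'I_m -> term K)
    (k0 : nat) (dl : option 'I_m) (ks : 'I_m -> nat) : seq (term K) :=
  (if k0 is 0 then [::] else [:: tpow (Xv 0) k0]) ++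
  (if dl is Some l then [:: St l] else [::]) ++
  flatten [seq (if ks l is 0 then [::] else [:: tpow (Tt l) (ks l)])
          | l <- rev (enum 'I_m)].

Definition inP (Tt St : 'I_m -> term K)
    (br : nat -> option 'I_m -> ('I_m -> nat) -> btree) (t : term K) : Prop :=
  exists k0 dl ks, Pfactors Tt St k0 dl ks <> [::] /\ t = bterm (br k0 dl ks).

End Terms.

(* Main.v *)
Require Import Defs.
From HB Require Import structures.
From mathcomp Require Import all_boot all_order all_algebra all_fingroup.
From mathcomp Require Import ring zify.
From Stdlib Require Import Classical FunctionalExtensionality.
Import GRing.Theory.

Fixpoint inl {I : Type} (x : I) (s : seq I) : Prop :=
  if s is y :: s' then y = x \/ inl x s' else False.

Lemma inl_cat {I : Type} (x : I) s1 s2 : inl x (s1 ++ s2) <-> inl x s1 \/ inl x s2.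
Proof. elim: s1 => [|y s IH] /=; first by tauto. rewrite IH; tauto. Qed.

Section Dickson.
Variables (I : Type) (enc : I -> nat -> nat) (n : nat).
Hypothesis Hn : forall x i, (n <= i)%N -> enc x i = 0.

Definition dle (y x : I) := forall i, (enc y i <= enc x i)%N.
Definition covers (L : seq I) (x : I) := exists z, inl z L /\ dle z x.

Lemma gather (A : eqType) (s : seq A) (Good : I -> Prop) (Cov : A -> I -> Prop) :
  (forall a, a \in s -> exists L, (forall x, inl x L -> Good x) /\
        forall y, Cov a y -> covers L y) ->
  exists L, (forall x, inl x L -> Good x) /\
        forall a y, a \in s -> Cov a y -> covers L y.
Proof.
elim: s => [|a s IH] H.
  by exists [::]; split => // a y.
have [La [G1 C1]] := H a (mem_head _ _).
have [Ls [G2 C2]] : exists L, (forall x, inl x L -> Good x) /\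
        forall a y, a \in s -> Cov a y -> covers L y.
  by apply: IH => b bs; apply: H; rewrite in_cons bs orbT.
exists (La ++ Ls); split.
  by move=> x /inl_cat [] ?; [apply: G1|apply: G2].
move=> b y; rewrite in_cons => /orP [/eqP -> | bs] Cy.
  have [z [zi zl]] := C1 y Cy; exists z; split => //; apply/inl_cat; tauto.
have [z [zi zl]] := C2 b y bs Cy; exists z; split => //; apply/inl_cat; tauto.
Qed.

Lemma dickson_step (Fr : seq nat) (S : I -> Prop) :
  (forall x y i, S x -> S y -> (i < n)%N -> i \notin Fr -> enc x i = enc y i) ->
  (forall i c, i \in Fr -> exists L, (forall x, inl x L -> S x) /\
        forall y, S y -> enc y i = c -> covers L y) ->
  exists L, (forall x, inl x L -> S x) /\ (forall x, S x -> covers L x).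
Proof.
move=> Hfix IH.
destruct (classic (exists x0, S x0)) as [[x0 Sx0] | none]; last first.
  by exists [::]; split => // x Sx; case: none; exists x.
have key : forall y, S y -> dle x0 y \/ exists i, i \in Fr /\ (enc y i < enc x0 i)%N.
  move=> y Sy; destruct (classic (dle x0 y)) as [h|h]; first by left.
  right; have [i hi] := not_all_ex_not _ _ h.
  have lt : (enc y i < enc x0 i)%N by rewrite ltnNge; apply/negP.
  exists i; split => //.
  case: (ltnP i n) => [iln|nli]; last by rewrite !Hn in lt.
  apply/negPn/negP => nF; by rewrite (Hfix x0 y i) // ltnn in lt.
have [LL [G C]] : exists L, (forall x, inl x L -> S x) /\
     forall i y, i \in Fr -> (S y /\ (enc y i < enc x0 i)%N) -> covers L y.
  apply: gather => i iF.
  have [L [G' C']] : exists L, (forall x, inl x L -> S x) /\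
     forall c y, c \in iota 0 (enc x0 i) -> (S y /\ enc y i = c) -> covers L y.
    apply: gather => c _.
    have [L [G1 C1]] := IH i c iF.
    by exists L; split => // y [Sy Ey]; apply: C1.
  exists L; split => // y [Sy lt]; apply: (C' (enc y i)) => //.
  by rewrite mem_iota add0n lt.
exists (x0 :: LL); split.
  by move=> x /= [<-|xi] //; apply: G.
move=> x Sx; case: (key x Sx) => [le | [i [iF lt]]].
  by exists x0; split => //=; left.
have [z [zi zl]] := C i x iF (conj Sx lt); exists z; split => //=; right.
by [].
Qed.

Lemma dickson_gen k : forall (Fr : seq nat) (S : I -> Prop), (size Fr <= k)%N -> uniq Fr ->
  (forall x y i, S x -> S y -> (i < n)%N -> i \notin Fr -> enc x i = enc y i) ->
  exists L, (forall x, inl x L -> S x) /\ (forall x, S x -> covers L x).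
Proof.
elim: k => [|k IHk] Fr S sz uF Hfix.
  apply: (@dickson_step Fr S Hfix) => i c; by case: Fr sz {uF Hfix}.
apply: (@dickson_step Fr S Hfix) => i c iF.
have := IHk (rem i Fr) (fun y => S y /\ enc y i = c).
case.
- by rewrite size_rem //; move: sz; case: (size Fr) => //=.
- exact: rem_uniq.
- move=> x y j [Sx Ex] [Sy Ey] jn.
  rewrite (mem_rem_uniq _ uF) inE negb_and negbK => /orP [/eqP ->|jF].
    by rewrite Ex Ey.
  by apply: Hfix.
move=> L [G C]; exists L; split; first by move=> x /G [].
by move=> y Sy Ey; apply: C.
Qed.

Lemma dickson (S : I -> Prop) :
  exists L, (forall x, inl x L -> S x) /\ (forall x, S x -> covers L x).
Proof.
apply: (@dickson_gen (size (iota 0 n)) (iota 0 n)) => //; first exact: iota_uniq.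
by move=> x y i _ _ iln; rewrite mem_iota add0n iln.
Qed.
End Dickson.

Local Open Scope ring_scope.

Section Alg.
Variables (K : fieldType) (m : nat) (F : 'M[K]_m).
Variables (al : nat -> K) (v : nat -> 'rV[K]_m).
Notation ev := (evalB F al v).

Lemma bform0l x : bform F 0 x = 0.
Proof. by rewrite /bform !mul0mx mxE. Qed.
Lemma bform0r x : bform F x 0 = 0.
Proof. by rewrite /bform trmx0 mulmx0 mxE. Qed.

Lemma ev_add a b : ev (Add a b) = ((ev a).1 + (ev b).1, (ev a).2 + (ev b).2).
Proof. by []. Qed.

Lemma ev_homog b t : homog b t -> if b then (ev t).1 = 0 else (ev t).2 = 0.
Proof.
elim => //= [b0|b0 t1 u _ h1 _ h2|b0 c t1 _ h|b1 b2 t1 u _ h1 _ h2].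
- by case: b0.
- by case: b0 h1 h2 => -> ->; rewrite addr0.
- by case: b0 h => ->; rewrite ?mulr0 ?scaler0.
- case: b1 b2 h1 h2 => [] [] /= h1 h2.
  + by rewrite h1 h2 !scale0r addr0.
  + by rewrite h1 h2 mul0r bform0r add0r.
  + by rewrite h1 h2 mulr0 bform0l addr0.
  + by rewrite h1 h2 !scaler0 addr0.
Qed.

Definition nzv (p : K * 'rV[K]_m) : bool := p.2 != 0.
Definition Aprod (ps : seq (K * 'rV[K]_m)) : K := \prod_(p <- ps) p.1.
Fixpoint Vs (ps : seq (K * 'rV[K]_m)) : 'rV[K]_m :=
  if ps is p :: ps' then p.1 *: Vs ps' + Aprod ps' *: p.2 else 0.

Lemma Aprod_cat ps qs : Aprod (ps ++ qs) = Aprod ps * Aprod qs.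
Proof. by rewrite /Aprod big_cat. Qed.

Lemma Vs_cat ps qs : Vs (ps ++ qs) = Aprod qs *: Vs ps + Aprod ps *: Vs qs.
Proof.
elim: ps => [|p ps IH] /=; first by rewrite /Aprod big_nil scaler0 add0r scale1r.
rewrite IH Aprod_cat /Aprod big_cons !scalerDr !scalerA -!/(Aprod _).
rewrite [Aprod qs * p.1]mulrC [p.1 * Aprod qs]mulrC -!addrA; congr (_ + _).
by rewrite addrC [Aprod ps * _]mulrC.
Qed.

Lemma Vs0 ps : count nzv ps = 0%N -> Vs ps = 0.
Proof.
elim: ps => [|p ps IH] //=; rewrite /nzv; case: eqP => //= h0 /IH ->.
by rewrite h0 !scaler0 addr0.
Qed.

Lemma ev_tree b : (count nzv (map ev (frontier b)) <= 1)%N ->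
  ev (bterm b) = (Aprod (map ev (frontier b)), Vs (map ev (frontier b))).
Proof.
elim: b => [t|l IHl r IHr] /=.
  move=> _; rewrite /Aprod big_cons big_nil mulr1 scaler0 add0r scale1r.
  by case: (ev t).
rewrite map_cat count_cat => hc.
have hl : (count nzv (map ev (frontier l)) <= 1)%N.
  by apply: leq_trans hc; apply: leq_addr.
have hr : (count nzv (map ev (frontier r)) <= 1)%N.
  by apply: leq_trans hc; apply: leq_addl.
rewrite (IHl hl) (IHr hr) /Bmul /= Aprod_cat Vs_cat.
have [h0|h0] : count nzv (map ev (frontier l)) = 0%N \/ count nzv (map ev (frontier r)) = 0%N.
  move: hc; case: (count nzv (map ev (frontier l))) => [|c]; first by move=> _; left.
  rewrite addSn ltnS leqn0 addn_eq0 => /andP [_ /eqP h]; right; exact h.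
  by rewrite (Vs0 _ h0) bform0l !scaler0 !addr0 !add0r.
by rewrite (Vs0 _ h0) bform0r !scaler0 !addr0 !add0r.
Qed.

Lemma ev_tpow t n : (ev t).2 = 0 -> ev (tpow t n.+1) = ((ev t).1 ^+ n.+1, 0).
Proof.
move=> h; rewrite /tpow /=; elim: n => [|n IH] /=; first by case: (ev t) h => a w /= ->.
rewrite IH /Bmul /= h bform0r addr0 !scaler0 addr0 -!exprSr //.
Qed.

Lemma ev_lprod h tl : (ev h).2 = 0 -> (forall t, inl t tl -> (ev t).2 = 0) ->
  ev (lprod h tl) = (Aprod (map ev (h :: tl)), 0).
Proof.
elim: tl h => [|x tl IH] h h0 ht /=.
  by rewrite /Aprod big_cons big_nil mulr1; case: (ev h) h0 => a w /= ->.
have hx : (ev x).2 = 0 by apply: ht; left.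
have hm : Bmul F (ev h) (ev x) = ((ev h).1 * (ev x).1, 0).
  by rewrite /Bmul /= h0 hx bform0r addr0 !scaler0 addr0.
rewrite /lprod /= -/(lprod _ _) IH /=.
- by rewrite /Aprod !big_cons hm /= mulrA.
- by rewrite h0 hx !scaler0 addr0.
- by move=> t ti; apply: ht; right.
Qed.

Lemma Aprod_nseq n t : Aprod (map ev (nseq n t)) = (ev t).1 ^+ n.
Proof.
elim: n => [|n IH]; first by rewrite /Aprod big_nil expr0.
by rewrite /= /Aprod big_cons -/(Aprod _) IH exprS.
Qed.

End Alg.
Arguments Aprod {K m}. Arguments Vs {K m}. Arguments nzv {K m}.
Arguments Aprod_cat {K m}. Arguments Vs_cat {K m}. Arguments Vs0 {K m}.
Arguments ev_homog {K m F al v}. Arguments ev_tree {K m F al v}.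
Arguments ev_tpow {K m F al v}. Arguments ev_lprod {K m F al v}.
Arguments Aprod_nseq {K m F al v}.

Section Cong.
Variable K : fieldType.

Lemma subst_id (t : term K) : subst Xv Yv t = t.
Proof. by elim: t => //= [a -> b ->|c a ->|a -> b ->]. Qed.

Lemma homog_tsum (A : Type) b (f : A -> term K) (s : seq A) :
  (forall x, homog b (f x)) -> homog b (tsum (map f s)).
Proof. move=> h; elim: s => [|x s IH] /=; [exact: homog_0 | exact: homog_Add]. Qed.

Lemma homog_lprod (A : Type) (f : A -> term K) (s : seq A) h :
  homog false h -> (forall x, homog false (f x)) -> homog false (lprod h (map f s)).
Proof.
move=> + hf; elim: s h => [|x s IH] h hh //=.
by apply: IH; exact: (homog_Mul hh (hf x)).
Qed.

Lemma homog_Tterm n : homog false (Tterm K n).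
Proof.
apply: homog_tsum => s; apply: homog_Scale; apply: homog_lprod.
  exact: (homog_Mul (homog_Y K 0) (homog_Y K _)).
move=> i; exact: (homog_Mul (homog_Y K _) (homog_Y K _)).
Qed.

Variable G : term K -> Prop.

Lemma cong_double t : cong G t (Add t t) -> cong G t Zero.
Proof.
move=> h; apply: c_sym.
apply: c_trans (c_sym (c_addN _ t)) _.
apply: c_trans (c_Add h (c_refl _ _)) _.
apply: c_trans (c_sym (c_addA _ _ _ _)) _.
apply: c_trans (c_Add (c_refl _ _) (c_addN _ _)) _.
apply: c_trans (c_addC _ _ _) _.
exact: c_add0.
Qed.

Lemma cong_scale0 c : cong G (Scale c Zero) Zero.
Proof.
apply: cong_double.
apply: c_trans (c_Scale c (c_sym (c_add0 _ Zero))) _.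
exact: c_scaleDr.
Qed.

Lemma cong_mul0 t : cong G (Mul Zero t) Zero.
Proof.
apply: cong_double.
apply: c_trans (c_Mul (c_sym (c_add0 _ Zero)) (c_refl _ t)) _.
exact: c_mulDl.
Qed.

Lemma cong_sub a b : cong G (tsub a b) Zero -> cong G b Zero -> cong G a Zero.
Proof.
move=> hd hb; apply: c_trans _ hd.
apply: c_sym; rewrite /tsub.
apply: c_trans (c_Add (c_refl _ a) (c_trans (c_Scale _ hb) (cong_scale0 _))) _.
apply: c_trans (c_addC _ _ _) _.
exact: c_add0.
Qed.

Lemma cong_gen g : G g -> cong G g Zero.
Proof.
move=> hg; rewrite -(subst_id g); apply: c_gen => // i; [exact: homog_X | exact: homog_Y].
Qed.
End Cong.
Arguments cong_gen {K G g}. Arguments cong_sub {K G a b}. Arguments cong_mul0 {K G}.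

Section Main.
Variables (K : fieldType) (m : nat) (F : 'M[K]_m) (Tt St : 'I_m -> term K).
Hypothesis hT : forall l : 'I_m, Id2 F (tsub (Tt l) (Tterm K l)).
Variable br : nat -> option 'I_m -> ('I_m -> nat) -> btree K.
Hypothesis hbr : forall k0 dl ks, Pfactors Tt St k0 dl ks <> [::] ->
           frontier (br k0 dl ks) = Pfactors Tt St k0 dl ks.

Section Ev.
Variables (al : nat -> K) (v : nat -> 'rV[K]_m).
Notation ev := (evalB F al v).

Lemma ev_Tt l : (ev (Tt l)).2 = 0.
Proof.
have := congr1 snd (hT l al v); rewrite /tsub ev_add /=.
by rewrite (ev_homog _ _ (homog_Tterm K l)) scaler0 addr0.
Qed.

Definition Tprod (ks : 'I_m -> nat) := \prod_(l <- rev (enum 'I_m)) (ev (Tt l)).1 ^+ ks l.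
Definition ssl (dl : option 'I_m) := map ev (if dl is Some l then [:: St l] else [::]).

Lemma ts_facts (ks : 'I_m -> nat) (L : seq 'I_m) :
  let ts := map ev (flatten [seq (if ks l is 0 then [::] else [:: tpow (Tt l) (ks l)]) | l <- L]) in
  count nzv ts = 0%N /\ Aprod ts = \prod_(l <- L) (ev (Tt l)).1 ^+ ks l.
Proof.
elim: L => [|l L [IH1 IH2]] /=; first by rewrite /Aprod !big_nil.
rewrite map_cat count_cat Aprod_cat IH1 IH2 big_cons; case: (ks l) => [|n] /=.
  by rewrite /Aprod big_nil expr0 mul1r.
rewrite ev_tpow ?ev_Tt //= /nzv /= eqxx /= /Aprod big_cons big_nil mulr1.
by [].
Qed.

Lemma ev_P k0 dl ks : Pfactors Tt St k0 dl ks <> [::] ->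
  ev (bterm (br k0 dl ks)) =
  (al 0 ^+ k0 * (Aprod (ssl dl) * Tprod ks), al 0 ^+ k0 *: (Tprod ks *: Vs (ssl dl))).
Proof.
move=> hne; have [c0 a0] := ts_facts ks (rev (enum 'I_m)).
have [cx [ax vx]] : count nzv (map ev (if k0 is 0 then [::] else [:: tpow (Xv 0) k0])) = 0%N /\
   Aprod (map ev (if k0 is 0 then [::] else [:: tpow (Xv 0) k0])) = al 0 ^+ k0 /\
   Vs (map ev (if k0 is 0 then [::] else [:: tpow (Xv 0) k0])) = 0.
  case: k0 {hne} => [|n] /=; first by rewrite /Aprod big_nil expr0.
  rewrite ev_tpow //= /nzv /= eqxx /Aprod big_cons big_nil mulr1 /=.
  by rewrite scaler0 add0r scaler0.
rewrite ev_tree (hbr _ _ _ hne) /Pfactors !map_cat.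
  rewrite !Aprod_cat !Vs_cat ax vx a0 (Vs0 _ c0) -/(Tprod ks) -/(ssl dl) !scaler0 !addr0 add0r.
  by [].
rewrite !count_cat cx c0 addn0 add0n.
by case: dl {hne} => [l|] /=; rewrite /nzv //=; case: (_ != _).
Qed.

Lemma ev_tsub a b : ev a = ev b -> ev (tsub a b) = (0, 0).
Proof. by move=> e; rewrite /tsub ev_add /= e mulN1r scaleN1r !subrr. Qed.

Definition Elist k0 ks g0 gs : seq (term K) :=
  nseq (k0 - g0) (Xv 0) ++ flatten [seq nseq (ks l - gs l) (Tt l) | l <- rev (enum 'I_m)].

Lemma E_scal k0 ks g0 gs t : inl t (Elist k0 ks g0 gs) -> (ev t).2 = 0.
Proof.
have hn : forall (n : nat) (x t : term K), inl t (nseq n x) -> t = x.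
  move=> n x t'; elim: n => [|n IH] //= [<-|/IH] //.
rewrite /Elist => /inl_cat [/hn -> //|].
elim: (rev (enum 'I_m)) => //= l L IH /inl_cat [/hn ->|/IH //].
exact: ev_Tt.
Qed.

Lemma E_prod k0 ks g0 gs : Aprod (map ev (Elist k0 ks g0 gs)) =
  al 0 ^+ (k0 - g0) * \prod_(l <- rev (enum 'I_m)) (ev (Tt l)).1 ^+ (ks l - gs l).
Proof.
rewrite /Elist map_cat Aprod_cat Aprod_nseq /=; congr (_ * _).
elim: (rev (enum 'I_m)) => [|l L IH] /=; first by rewrite /Aprod !big_nil.
by rewrite map_cat Aprod_cat Aprod_nseq IH big_cons.
Qed.
End Ev.

Lemma E_nil k0 ks g0 gs : Elist k0 ks g0 gs = [::] ->
  (k0 - g0 = 0)%N /\ forall l, (ks l - gs l = 0)%N.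
Proof.
rewrite /Elist; case: (k0 - g0)%N => //= hf; split => // l.
have : l \in rev (enum 'I_m) by rewrite mem_rev mem_enum.
move: hf; elim: (rev (enum 'I_m)) => //= l' L IH.
case hl: (ks l' - gs l')%N => [|n] //= h; rewrite in_cons => /orP [/eqP -> //|].
exact: IH.
Qed.

Lemma key k0 dl ks g0 gs (G : term K -> Prop) :
  Pfactors Tt St k0 dl ks <> [::] -> Pfactors Tt St g0 dl gs <> [::] ->
  (g0 <= k0)%N -> (forall l, (gs l <= ks l)%N) ->
  G (bterm (br g0 dl gs)) -> (forall t, Id2 F t -> G t) ->
  inT2 G (bterm (br k0 dl ks)).
Proof.
move=> hk hg le0 lel hG hId.
case hE: (Elist k0 ks g0 gs) => [|h tl].
  have [e0 el] := E_nil _ _ _ _ hE.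
  have -> : k0 = g0 by apply/eqP; rewrite eqn_leq le0 -subn_eq0 e0.
  have -> : ks = gs.
    by apply: functional_extensionality => l; apply/eqP; rewrite eqn_leq lel -subn_eq0 el.
  exact: cong_gen.
apply: (cong_sub (b := Mul (bterm (br g0 dl gs)) (lprod h tl))).
  apply: cong_gen; apply: hId => al v; apply: ev_tsub.
  have hs := E_scal al v k0 ks g0 gs.
  rewrite hE in hs.
  rewrite /= (ev_P al v _ _ _ hk) (ev_P al v _ _ _ hg) (ev_lprod h tl); first last.
  - by move=> t ti; apply: hs; right.
  - by apply: hs; left.
  rewrite -hE E_prod /Bmul /= bform0r scaler0 addr0 add0r !scalerA.
  have eA : al 0 ^+ k0 = al 0 ^+ g0 * al 0 ^+ (k0 - g0) by rewrite -exprD subnKC.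
  have eT : Tprod al v ks = Tprod al v gs *
      \prod_(l <- rev (enum 'I_m)) ((evalB F al v (Tt l)).1 ^+ (ks l - gs l)).
    rewrite /Tprod -big_split /=; apply: eq_bigr => l _.
    by rewrite -exprD subnKC.
  rewrite eA eT; congr (_, _); first by ring.
  by congr (_ *: _); ring.
apply: c_trans (c_Mul (cong_gen hG) (c_refl _ _)) _.
exact: cong_mul0.
Qed.
End Main.


Lemma memT_map (K : fieldType) (A : Type) (f : A -> term K) (L : seq A) t :
  memT t (map f L) -> exists j, inl j L /\ f j = t.
Proof.
elim: L => //= a L IH [<-|/IH [j [jl <-]]]; first by exists a; split => //; left.
by exists j; split => //; right.
Qed.

Lemma memT_map2 (K : fieldType) (A : Type) (f : A -> term K) (L : seq A) j :
  inl j L -> memT (f j) (map f L).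
Proof. by elim: L => //= a L IH [->|/IH]; [left|right]. Qed.

Definition code {m} (o : option 'I_m) : nat := if o is Some l then (val l).+1 else 0.

Lemma code_le {m} (o : option 'I_m) : (code o <= m)%N.
Proof. by case: o => //= l; exact: ltn_ord. Qed.

Lemma code_inj {m} (o1 o2 : option 'I_m) : code o1 = code o2 -> o1 = o2.
Proof. by case: o1 => [a|]; case: o2 => [b|] //= [] /val_inj ->. Qed.

Theorem lemma4p4 (K : fieldType) (charK : [pchar K] =i pred0)
  (m : nat) (hm : (1 < m)%N)
  (F : 'M[K]_m) (Fsym : F^T = F) (Fnd : F \in unitmx)
  (Tt St : 'I_m -> term K)
  (hT : forall l : 'I_m, Id2 F (tsub (Tt l) (Tterm K l)))
  (hS : forall l : 'I_m, Id2 F (tsub (St l) (Sterm K l)))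
  (br : nat -> option 'I_m -> ('I_m -> nat) -> btree K)
  (hbr : forall k0 dl ks, Pfactors Tt St k0 dl ks <> [::] ->
           frontier (br k0 dl ks) = Pfactors Tt St k0 dl ks)
  (S : term K -> Prop)
  (hSP : forall t, S t -> inP Tt St br t) :
  exists Sh : seq (term K),
    (forall t, memT t Sh -> S t) /\
    (forall t, S t -> inT2 (fun g => memT g Sh \/ Id2 F g) t).
Proof.
pose I := (nat * option 'I_m * ('I_m -> nat))%type.
pose enc (j : I) (i : nat) : nat := match i with
  | 0 => code j.1.2 | 1 => (m - code j.1.2)%N | 2 => j.1.1
  | i'.+3 => oapp j.2 0%N (insub i' : option 'I_m) end.
have Hn : forall x i, (m.+3 <= i)%N -> enc x i = 0%N.
  move=> x [|[|[|i]]] // hi; rewrite /enc insubN //.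
  by rewrite -leqNgt.
pose Sidx (j : I) := S (bterm (br j.1.1 j.1.2 j.2)) /\ Pfactors Tt St j.1.1 j.1.2 j.2 <> [::].
have [L [LG LC]] := @dickson I enc m.+3 Hn Sidx.
pose f (j : I) := bterm (br j.1.1 j.1.2 j.2).
exists (map f L); split.
  by move=> t /memT_map [j [jL <-]]; exact: (LG j jL).1.
move=> t St0; have [k0 [dl [ks [hne et]]]] := hSP t St0; subst t.
have [z [zin zle]] := LC (k0, dl, ks) (conj St0 hne).
case: z zin zle => [[z0 zdl] zks] zin zle.
have hz := LG _ zin.
have ec : code zdl = code dl.
  have h0 := zle 0%N; have h1 := zle 1%N; rewrite /enc /= in h0 h1.
  have := @code_le m zdl; have := @code_le m dl; lia.
have edl := code_inj _ _ ec; subst zdl.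
apply: (@key K m F Tt St hT br hbr k0 dl ks z0 zks) => //.
- exact: hz.2.
- exact: (zle 2%N).
- move=> l; have := zle (val l).+3; rewrite /enc /= valK //.
- move=> /=; left; exact: (@memT_map2 K I f L _ zin).
- by move=> g; right.
Qed.
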